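(* Let $d\ge0$ and let $f\colon\{0,1\}^m\to\{0,1\}^n$ be a $d$-local function. Then there exist a set $S\subseteq[m]$ and numbers $r,t$ with $$|S|\le\frac{r}{2^{28t-18}},\qquad r\ge\frac{n}{\mathrm{tow}_2(16d)},\qquad t\le\mathrm{tow}_2(16d),$$ such that for every fixing $\rho\in\{0,1\}^S$ of the input bits in $S$, the restricted function $f_\rho\colon\{0,1\}^{[m]\setminus S}\to\{0,1\}^n$ is $(d,r,t)$-local.
   Context: A function is $d$-local if each output bit depends on at most $d$ input bits; $I_g(i)$ is the set of input coordinates on which output $i$ of $g$ depends. $f_\rho(z')=f(\rho,z')$. $N_g(i)=\{j: I_g(j)\cap I_g(i)\neq\emptyset\}$. Neighborhoods $N_g(i_1),\dots,N_g(i_r)$ are non-connected if the sets $\bigcup_{j\in N_g(i_a)}I_g(j)$ are pairwise disjoint. $g$ is $(d,r,t)$-local if it is $d$-local and has $r$ non-connected neighborhoods each of size at most $t$. $\mathrm{tow}_2(0)=1$, $\mathrm{tow}_2(h)=2^{\mathrm{tow}_2(h-1)}$. *)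

(* Defs.v *)
From mathcomp Require Import all_boot all_order all_algebra.
Set Implicit Arguments.
Unset Strict Implicit.
Unset Printing Implicit Defensive.
Import Order.TTheory GRing.Theory Num.Theory.

Definition flip (I : finType) (x : {ffun I -> bool}) (j : I) : {ffun I -> bool} :=
  [ffun k => if k == j then ~~ x k else x k].

Definition depset (I O : finType) (g : {ffun I -> bool} -> {ffun O -> bool})
  (i : O) : {set I} :=
  [set j | [exists x, g x i != g (flip x j) i]].

Definition local (I O : finType) (d : nat)
  (g : {ffun I -> bool} -> {ffun O -> bool}) : Prop :=
  forall i : O, #|depset g i| <= d.

Definition nbhd (I O : finType) (g : {ffun I -> bool} -> {ffun O -> bool})
  (i : O) : {set O} :=
  [set j | ~~ [disjoint depset g j & depset g i]].

Definition nbhd_inputs (I O : finType) (g : {ffun I -> bool} -> {ffun O -> bool})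
  (i : O) : {set I} :=
  \bigcup_(j in nbhd g i) depset g j.

Definition drt_local (I O : finType) (d r t : nat)
  (g : {ffun I -> bool} -> {ffun O -> bool}) : Prop :=
  local d g /\
  exists A : {set O},
    #|A| = r /\
    (forall a, a \in A -> #|nbhd g a| <= t) /\
    (forall a b, a \in A -> b \in A -> a != b ->
       [disjoint nbhd_inputs g a & nbhd_inputs g b]).

Definition merge (I : finType) (S : {set I})
  (rho : {ffun {j : I | j \in S} -> bool})
  (z : {ffun {j : I | j \notin S} -> bool}) : {ffun I -> bool} :=
  [ffun j => match (insub j : option {j : I | j \in S}) with
             | Some k => rho k
             | None => match (insub j : option {j : I | j \notin S}) with
                       | Some k => z k
                       | None => false
                       end
             end].

Definition restrict (I O : finType) (S : {set I})
  (f : {ffun I -> bool} -> {ffun O -> bool})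
  (rho : {ffun {j : I | j \in S} -> bool}) :
  {ffun {j : I | j \notin S} -> bool} -> {ffun O -> bool} :=
  fun z => f (merge rho z).

Fixpoint tow2 (h : nat) : nat :=
  match h with
  | 0 => 1
  | h'.+1 => 2 ^ tow2 h'
  end.

(* Main.v *)
Require Import Defs.
From mathcomp Require Import all_boot all_order all_algebra.
Import Order.TTheory GRing.Theory Num.Theory.
Set Implicit Arguments. Unset Strict Implicit. Unset Printing Implicit Defensive.

Lemma rat_cost (s a t : nat) : s * 2 ^ (28 * t) <= a * 2 ^ 18 ->
  ((s%:R : rat) <= (a%:R : rat) / ((2%:R : rat) ^ (28 * (t%:Z) - 18)%R))%R.
Proof.
move=> H.
have e1 : (28 * (t%:Z) - 18 = (28 * t)%N%:Z - (18%N)%:Z)%R by rewrite PoszM.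
rewrite e1 expfzDr; last by rewrite pnatr_eq0.
rewrite -invr_expz -!exprnP.
have P1 : (0 < (2%:R : rat) ^+ (28 * t))%R by rewrite exprn_gt0 // ltr0n.
have P2 : (0 < (2%:R : rat) ^+ 18)%R by rewrite exprn_gt0 // ltr0n.
rewrite (ler_pdivlMr _ _ (divr_gt0 P1 P2)).
rewrite mulrA (ler_pdivrMr _ _ P2).
rewrite -!natrX -!natrM ler_nat.
exact: H.
Qed.

Lemma rat_lb (n a T : nat) : 0 < T -> n <= a * T ->
  ((a%:R : rat) >= (n%:R : rat) / (T%:R : rat))%R.
Proof.
move=> T0 H; rewrite ler_pdivrMr ?ltr0n // -natrM ler_nat; exact: H.
Qed.


From mathcomp Require Import zify.

Lemma card_bigcup_le (T I : finType) (P : pred I) (F : I -> {set T}) :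
  #|\bigcup_(i | P i) F i| <= \sum_(i | P i) #|F i|.
Proof.
elim/big_rec2: _ => [|i s U _ H]; first by rewrite cards0.
by apply: leq_trans (leq_card_setU _ _) _; rewrite leq_add2l.
Qed.

Lemma pigeon (J B : nat) (F : nat -> nat) : 0 < J ->
  \sum_(j < J) F j <= B -> exists2 j, j < J & F j * J <= B.
Proof.
move=> J0 HS; case: (boolP [exists j : 'I_J, F j * J <= B]) => [/existsP [j Hj]|/existsPn H].
  by exists j.
exfalso; move: HS; apply/negP; rewrite -ltnNge.
have : \sum_(j < J) B.+1 <= \sum_(j < J) F j * J.
  by apply: leq_sum => j _; move: (H j); rewrite -ltnNge.
rewrite sum_nat_const card_ord -big_distrl /= => H2.
rewrite -(ltn_pmul2r J0); apply: leq_trans H2; by rewrite mulnC ltn_pmul2l.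
Qed.

Lemma greedy (T : finType) (R : rel T) (Dl : nat) : symmetric R ->
  forall C : {set T},
  (forall a, a \in C -> #|[set b in C | (b != a) && R a b]| <= Dl) ->
  exists A : {set T}, [/\ A \subset C,
    (forall a b, a \in A -> b \in A -> a != b -> ~~ R a b) &
    #|C| <= #|A| * Dl.+1].
Proof.
move=> sR C; move: {2}#|C| (leqnn #|C|) => n; elim: n C => [|n IH] C HC HD.
  exists set0; split; rewrite ?sub0set //; first by move=> a b; rewrite inE.
  by move: HC; rewrite leqn0 => /eqP ->.
case: (set_0Vmem C) => [->|[c cC]].
  by exists set0; split; rewrite ?sub0set ?cards0 // => a b; rewrite inE.
pose N := c |: [set b in C | (b != c) && R c b].
pose C' := C :\: N.
have sC' : C' \subset C by apply: subsetDl.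
have cN : c \in N by rewrite setU11.
have HC' : #|C'| <= n.
  have : #|C'| < #|C| by apply: proper_card; apply/properP; split => //; exists c => //; rewrite inE cN.
  by move=> H; rewrite -ltnS; apply: leq_trans H HC.
have HD' : forall a, a \in C' -> #|[set b in C' | (b != a) && R a b]| <= Dl.
  move=> a aC'; apply: leq_trans (HD a (subsetP sC' a aC')).
  by apply: subset_leq_card; apply/subsetP => b; rewrite !inE => /andP [/andP [_ ->] ->].
case: (IH C' HC' HD') => A' [sA' iA' cA'].
exists (c |: A'); split.
- by rewrite subUset sub1set cC (subset_trans sA' sC').
- have key : forall b, b \in A' -> ~~ R c b.
    move=> b bA; have := subsetP sA' b bA; rewrite !inE negb_or => /andP [/andP [bc]].
    by rewrite bc (subsetP (subset_trans sA' sC') b bA) /= => /negbTE ->.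
  move=> a b; rewrite !inE => /orP [/eqP ->|aA] /orP [/eqP ->|bA]; rewrite ?eqxx //.
  + by move=> _; apply: key.
  + by move=> _; rewrite sR; apply: key.
  + by apply: iA'.
- have cA : c \notin A' by apply/negP => /(subsetP sA'); rewrite inE cN.
  rewrite cardsU1 cA add1n mulSn.
  have HN : #|N| <= Dl.+1 by rewrite cardsU1 -add1n leq_add ?leq_b1 ?HD.
  have HCN : #|C| <= #|C'| + #|N|.
    apply: leq_trans (leq_card_setU _ _).
    apply: subset_leq_card; apply/subsetP => x xC; rewrite !inE xC andbT.
    by case: (x == c); case: (R c x); rewrite ?orbT /=; rewrite ?orbT ?andbF ?andbT ?orbF /=; case: (x != c).
  apply: leq_trans HCN _; rewrite addnC; apply: leq_add => //.
Qed.

Lemma tow2_lt h : tow2 h < tow2 h.+1.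
Proof. by rewrite /= ltn_expl. Qed.

Lemma tow2_mono m n : m <= n -> tow2 m <= tow2 n.
Proof.
move=> /subnK <-; elim: (n - m) => [|k IH] //.
by rewrite addSn; apply: leq_trans IH (ltnW (tow2_lt _)).
Qed.

Lemma tow2_ge h : h < tow2 h.
Proof. by elim: h => [|h IH] //; apply: leq_trans (tow2_lt h); rewrite ltnS. Qed.

Lemma tow2_16 h : 3 <= h -> 16 <= tow2 h.
Proof. by move=> H; apply: leq_trans (tow2_mono H). Qed.

Lemma lin_exp t : 5 <= t -> 5 * t + 7 <= 2 ^ t.
Proof.
elim: t => [|t IH] //; rewrite leq_eqVlt => /orP [/eqP <-|] //.
rewrite ltnS => Ht; have H := IH Ht; rewrite expnS; move: H; set x := 2 ^ t; lia.
Qed.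

Lemma poly_exp t : t * (t ^ 3 + 1) <= 2 ^ (4 * t).
Proof.
have h1 : t <= 2 ^ t by apply: ltnW; apply: ltn_expl.
have h3 : t ^ 3 + 1 <= 2 ^ (3 * t).
  have : t ^ 3 < (2 ^ t) ^ 3 by rewrite ltn_exp2r //; apply: ltn_expl.
  by rewrite -expnM mulnC addn1.
have -> : 4 * t = t + 3 * t by lia.
by rewrite expnD leq_mul.
Qed.

Definition dg (I O : finType) (D : O -> {set I}) (x : I) := #|[set i | x \in D i]|.

Lemma card_indic (T : finType) (P : pred T) : #|[set x | P x]| = \sum_x P x.
Proof. by rewrite -sum1_card big_mkcond /=; apply: eq_bigr => x _; rewrite inE; case: (P x). Qed.

Lemma sum_dg (I O : finType) (D : O -> {set I}) :
  \sum_x dg D x = \sum_i #|D i|.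
Proof.
rewrite /dg; under eq_bigr do rewrite card_indic.
rewrite exchange_big; apply: eq_bigr => i _.
by rewrite -sum1_card [RHS]big_mkcond; apply: eq_bigr => x _; case: (x \in D i).
Qed.

Lemma heavy_card (I O : finType) (D : O -> {set I}) w :
  #|[set x | w <= dg D x]| * w <= \sum_x dg D x.
Proof.
rewrite -sum_nat_const big_mkcond; apply: leq_sum => x _; rewrite inE; by case: ifP.
Qed.

Lemma le1_window (s : nat -> nat) J v : (forall a b, a <= b -> s a <= s b) ->
  \sum_(j < J) ((s j <= v) && (v < s j.+1)) <= 1.
Proof.
move=> sM; rewrite -card_indic.
case: (set_0Vmem [set j : 'I_J | (s j <= v) && (v < s j.+1)]) => [->|[j0]]; first by rewrite cards0.
rewrite inE => /andP [h1 h2]; rewrite -(cards1 j0); apply: subset_leq_card; apply/subsetP => j.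
rewrite !inE => /andP [h3 h4]; apply/eqP/val_inj => /=.
case: (ltngtP j j0) => // H.
  by have := sM _ _ H; move=> H5; move: (leq_trans h4 (leq_trans H5 h1)); rewrite ltnn.
by have := sM _ _ H; move=> H5; move: (leq_trans h2 (leq_trans H5 h3)); rewrite ltnn.
Qed.

Lemma touch_sum (O I : finType) (P : {set O}) (Y : O -> {set I}) (g : I -> nat) (s : nat -> nat) (J : nat) :
  (forall a b, a <= b -> s a <= s b) ->
  \sum_(j < J) #|[set a in P | [exists x in Y a, (s j <= g x) && (g x < s j.+1)]]|
    <= \sum_(a in P) #|Y a|.
Proof.
move=> sM.
have E : forall j : 'I_J, #|[set a in P | [exists x in Y a, (s j <= g x) && (g x < s j.+1)]]|
   = \sum_(a in P) [exists x in Y a, (s j <= g x) && (g x < s j.+1)].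
  move=> j; rewrite card_indic [RHS]big_mkcond; apply: eq_bigr => a _.
  by case: (a \in P).
rewrite (eq_bigr _ (fun j _ => E j)).
rewrite exchange_big; apply: leq_sum => a _.
apply: leq_trans (_ : \sum_(j < J) \sum_(x in Y a) ((s j <= g x) && (g x < s j.+1)) <= _).
  apply: leq_sum => j _; case: existsP => [[x /andP [xY Hx]]|] //.
  by rewrite (bigD1 x) //= Hx.
rewrite exchange_big -sum1_card; apply: leq_sum => x _; exact: le1_window.
Qed.

Lemma card_split (T : finType) (P : {set T}) (Q : pred T) :
  #|[set a in P | Q a]| + #|[set a in P | ~~ Q a]| = #|P|.
Proof.
rewrite -(cardsID [set a | Q a] P); congr (_ + _); apply: eq_card => a; rewrite !inE; by case: (a \in P); case: (Q a).
Qed.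

Definition NB0 (I O : finType) (D : O -> {set I}) (t : nat) (z : O) : {set O} :=
  [set b | [exists y in D z, (dg D y < t) && (y \in D b)]].

Lemma card_NB0 (I O : finType) (D : O -> {set I}) d t z :
  (forall i, #|D i| <= d) -> #|NB0 D t z| <= d * t.
Proof.
move=> Dd.
apply: leq_trans (_ : #|\bigcup_(y | y \in [set y in D z | dg D y < t]) [set b | y \in D b]| <= _).
  apply: subset_leq_card; apply/subsetP => b; rewrite inE => /existsP [y /andP [yD /andP [yt yb]]].
  by apply/bigcupP; exists y; rewrite !inE ?yD ?yt.
apply: leq_trans (card_bigcup_le _ _) _.
apply: leq_trans (_ : \sum_(y | y \in [set y in D z | dg D y < t]) t <= _).
  by apply: leq_sum => y; rewrite inE => /andP [_ /ltnW].
rewrite sum_nat_const leq_mul2r; apply/orP; right.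
apply: leq_trans (Dd z); apply: subset_leq_card; apply/subsetP => y; rewrite inE; by case/andP.
Qed.

Lemma card_Xa (I O : finType) (D : O -> {set I}) d t a :
  (forall i, #|D i| <= d) -> #|\bigcup_(b in NB0 D t a) D b| <= d * t * d.
Proof.
move=> Dd; apply: leq_trans (card_bigcup_le _ _) _.
apply: leq_trans (_ : \sum_(b in NB0 D t a) d <= _); first by apply: leq_sum => b _.
by rewrite sum_nat_const leq_mul2r card_NB0 ?orbT.
Qed.

Lemma lin_exp6 t : 6 <= t -> 6 * t + 3 <= 2 ^ t.
Proof.
elim: t => [|t IH] //; rewrite leq_eqVlt => /orP [/eqP <-|] //.
rewrite ltnS => Ht; have H := IH Ht; rewrite expnS; move: H; set x := 2 ^ t; lia.
Qed.

Lemma pow_le t k : t ^ k <= 2 ^ (k * t).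
Proof. case: k => [|k]; first by rewrite mul0n. by rewrite mulnC expnM leq_exp2r //; apply: ltnW; apply: ltn_expl. Qed.

Lemma fit t d : d <= t -> 5 <= t ->
  t * (2 ^ (32 * (d * t) + 2)) ^ (2 * d * (d * t)).+1 <= 2 ^ (2 ^ (2 ^ t)).
Proof.
move=> dt t5.
set E := (32 * (d * t) + 2) * (2 * d * (d * t)).+1.
rewrite -expnM -/E.
apply: leq_trans (_ : 2 ^ t * 2 ^ E <= _).
  by rewrite leq_mul2r; apply/orP; right; apply: ltnW; apply: ltn_expl.
rewrite -expnD leq_exp2l //.
have h1 : t + E <= 128 * t ^ 5.
  rewrite /E; have H : d * t <= t * t by rewrite leq_mul2r dt orbT.
  have t1 : 1 <= t by apply: leq_trans t5.
  have t2 : 1 <= t * t by rewrite muln_gt0 t1.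
  have a1 : 32 * (d * t) + 2 <= 34 * (t * t) by lia.
  have a2' : d * (d * t) <= t * (t * t) by apply: leq_mul.
  have t3 : 1 <= t * (t * t) by rewrite !muln_gt0 t1.
  have a2 : (2 * d * (d * t)).+1 <= 3 * (t * (t * t)) by rewrite -mulnA; lia.
  have a3 := leq_mul a1 a2.
  have t5' : t <= t * (t * t) * (t * t).
    by apply: leq_trans (_ : t <= t * (t * t)) _; rewrite leq_pmulr.
  rewrite !expnS expn0 muln1.
  have -> : t * (t * (t * (t * t))) = t * (t * t) * (t * t) by rewrite !mulnA.
  move: a3 t5'; set P := t * (t * t) * (t * t); set u := (32 * (d * t) + 2); set v := (2 * d * (d * t)).+1.
  have -> : 34 * (t * t) * (3 * (t * (t * t))) = 102 * P by rewrite /P; lia.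
  lia.
apply: leq_trans h1 _.
apply: leq_trans (_ : 2 ^ 7 * 2 ^ (5 * t) <= _); first by rewrite leq_mul2l pow_le orbT.
by rewrite -expnD leq_exp2l // addnC lin_exp.
Qed.

Lemma big_bound X : 6 <= X -> 8 * X ^ 6 <= 2 ^ (2 ^ X).
Proof.
move=> X6; apply: leq_trans (_ : 2 ^ 3 * 2 ^ (6 * X) <= _); first by rewrite leq_mul2l pow_le orbT.
by rewrite -expnD leq_exp2l // addnC lin_exp6.
Qed.

Lemma half_lemma F C m : F * (2 * m).+1 <= (F + C) * m -> F <= C.
Proof.
move=> H; rewrite -(leq_pmul2r (ltn0Sn m)).
have : F * m + F * m.+1 <= F * m + C * m.
  by move: H; rewrite mulnDl; have -> : F * (2 * m).+1 = F * m + F * m.+1 by rewrite -mulnDr; congr (_ * _); lia.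
rewrite leq_add2l => H2; apply: leq_trans H2 _; by rewrite leq_mul2l leqnSn orbT.
Qed.

Definition NBS (I O : finType) (D : O -> {set I}) (S : {set I}) (a : O) : {set O} :=
  [set b | [exists x in D a, (x \notin S) && (x \in D b)]].
Definition XS (I O : finType) (D : O -> {set I}) (S : {set I}) (a : O) : {set I} :=
  [set x | (x \notin S) && [exists b in NBS D S a, x \in D b]].

Lemma core (I O : finType) (d : nat) (D : O -> {set I}) :
  0 < d -> (forall i, #|D i| <= d) ->
  exists (S : {set I}) (A : {set O}) (t : nat),
  [/\ forall a, a \in A -> #|NBS D S a| <= t,
      forall a b, a \in A -> b \in A -> a != b -> [disjoint XS D S a & XS D S b],
      #|S| * 2 ^ (28 * t) <= #|A| * 2 ^ 18,
      #|O| <= #|A| * tow2 (16 * d) &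
      t <= tow2 (16 * d)].
Proof.
move=> d0 Dd.
pose tj j := tow2 (3 * j + d + 3).
have tjM : forall a b, a <= b -> tj a <= tj b.
  by move=> a b ab; apply: tow2_mono; rewrite leq_add2r leq_add2r leq_mul2l ab orbT.
pose J := (2 * d).+1.
have sumD : \sum_a #|D a| <= #|O| * d.
  apply: leq_trans (_ : \sum_a d <= _); first by apply: leq_sum.
  by rewrite sum_nat_const.
have H1 := touch_sum [set: O] D (dg D) J tjM.
have E0 : \sum_(a in [set: O]) #|D a| = \sum_a #|D a| by apply: eq_bigl => a; rewrite inE.
rewrite E0 in H1.
have H1' := leq_trans H1 sumD.
pose F1 := fun j => #|[set a in [set: O] | [exists x in D a, (tj j <= dg D x) && (dg D x < tj j.+1)]]|.
case: (@pigeon J (#|O| * d) F1 (ltn0Sn _) H1') => j jJ Hj.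
pose B1 := fun a => [exists x in D a, (tj j <= dg D x) && (dg D x < tj j.+1)].
pose C1 := [set a in [set: O] | ~~ B1 a].
have cC1 : #|O| <= 2 * #|C1|.
  have E := card_split [set: O] B1; rewrite cardsT in E.
  have E' : F1 j + #|C1| = #|O| by exact: E.
  have H : F1 j <= #|C1| by apply: (half_lemma (m:=d)); rewrite E'.
  by rewrite -E' mul2n -addnn leq_add2r.
pose t := tj j.
have td : d + 3 < t by apply: leq_trans (tow2_ge _) (tow2_mono _); lia.
have t5 : 5 <= t by apply: leq_trans td; rewrite addn3 ltnS !ltnS.
have dt : d <= t by apply: leq_trans (ltnW td); rewrite leq_addr.
pose tau := d * t.
pose L := (2 * d * tau).+1.
pose Q := 2 ^ (32 * tau + 2).
pose w k := t * Q ^ k.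
have Q0 : 0 < Q by rewrite expn_gt0.
have wM : forall a b, a <= b -> w a <= w b.
  by move=> a b ab; rewrite leq_mul2l leq_pexp2l ?orbT.
have w0 : forall k, 0 < w k by move=> k; rewrite muln_gt0 expn_gt0 Q0 andbT; apply: leq_trans t5.
have tjS : tj j.+1 = 2 ^ (2 ^ (2 ^ t)).
  by rewrite /tj (_ : 3 * j.+1 + d + 3 = (3 * j + d + 3).+3) //; lia.
have wL : w L <= tj j.+1 by rewrite tjS; apply: fit.
pose Xa a := \bigcup_(b in NB0 D t a) D b.
have sumX : \sum_(a in C1) #|Xa a| <= #|C1| * (tau * d).
  apply: leq_trans (_ : \sum_(a in C1) (tau * d) <= _); last by rewrite sum_nat_const.
  by apply: leq_sum => a _; apply: card_Xa.
have H2 := leq_trans (touch_sum C1 Xa (dg D) L wM) sumX.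
pose G := fun k => #|[set a in C1 | [exists x in Xa a, (w k <= dg D x) && (dg D x < w k.+1)]]|.
case: (@pigeon L (#|C1| * (tau * d)) G (ltn0Sn _) H2) => k kL Hk.
pose B2 := fun a => [exists x in Xa a, (w k <= dg D x) && (dg D x < w k.+1)].
pose C2 := [set a in C1 | ~~ B2 a].
have cC2 : #|C1| <= 2 * #|C2|.
  have E : G k + #|C2| = #|C1| by exact: card_split C1 B2.
  have H : G k <= #|C2|.
    apply: (half_lemma (m:=tau * d)); rewrite E; move: Hk; rewrite /L.
    by have -> : 2 * d * tau = 2 * (tau * d) by lia.
  by rewrite -E mul2n -addnn leq_add2r.
pose S := [set x | w k.+1 <= dg D x].
have cS : #|S| * w k.+1 <= #|O| * d.
  by apply: leq_trans (heavy_card D _) _; rewrite sum_dg.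
pose R := [rel a b | [exists x, [&& x \notin S, x \in Xa a & x \in Xa b]]].
have sR : symmetric R.
  move=> a b /=; apply/existsP/existsP => [] [x /and3P [h1 h2 h3]]; exists x; by rewrite h1 h2 h3.
pose Dl := (tau * d) * (w k * tau).
have HD : forall a, a \in C2 -> #|[set b in C2 | (b != a) && R a b]| <= Dl.
  move=> a aC2.
  have sub : [set b in C2 | (b != a) && R a b] \subset
      \bigcup_(x in [set x in Xa a | x \notin S]) \bigcup_(b' in [set b' | x \in D b']) NB0 D t b'.
    apply/subsetP => b; rewrite !inE => /andP [bC2 /andP [_ /existsP [x /and3P [xS xa xb]]]].
    apply/bigcupP; exists x; first by rewrite inE xa xS.
    move/bigcupP: xb => [b' b'N xb'].
    apply/bigcupP; exists b'; first by rewrite inE.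
    move: b'N; rewrite !inE => /existsP [y /andP [yb /andP [yt yb']]].
    by apply/existsP; exists y; rewrite yb' yt yb.
  apply: leq_trans (subset_leq_card sub) _.
  apply: leq_trans (card_bigcup_le _ _) _.
  apply: leq_trans (_ : \sum_(x in [set x in Xa a | x \notin S]) (w k * tau) <= _).
    apply: leq_sum => x; rewrite inE => /andP [xa xS].
    apply: leq_trans (card_bigcup_le _ _) _.
    apply: leq_trans (_ : \sum_(b' in [set b' | x \in D b']) tau <= _).
      by apply: leq_sum => b' _; apply: card_NB0.
    rewrite sum_nat_const leq_mul2r; apply/orP; right.
    have nB : ~~ B2 a by move: aC2; rewrite inE => /andP [_].
    have h2 : dg D x < w k.+1 by move: xS; rewrite inE -ltnNge.
    case: (leqP (w k) (dg D x)) => h1; last by apply: ltnW.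
    by move/negP: nB; case; apply/existsP; exists x; rewrite xa h1 h2.
  rewrite sum_nat_const /Dl leq_mul2r; apply/orP; right.
  apply: leq_trans (@card_Xa _ _ D d t a Dd); apply: subset_leq_card; apply/subsetP => x; rewrite inE; by case/andP.
case: (greedy sR HD) => A [sA iA cA].
have AC1 : forall a, a \in A -> a \in C1.
  by move=> a /(subsetP sA); rewrite inE; case/andP.
have NBsub : forall a b, a \in C1 -> b \in NBS D S a -> b \in NB0 D t a.
  move=> a b aC1; rewrite !inE => /existsP [x /andP [xa /andP [xS xb]]].
  apply/existsP; exists x; rewrite xa xb andbT /=.
  have nB : ~~ B1 a by move: aC1; rewrite !inE.
  have h2 : dg D x < tj j.+1.
    apply: leq_trans wL; apply: leq_trans (wM k.+1 L kL).
    by move: xS; rewrite inE -ltnNge.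
  case: (leqP t (dg D x)) => // h1.
  by move/negP: nB; case; apply/existsP; exists x; rewrite xa h1 h2.
have hO : #|O| <= 4 * (#|A| * Dl.+1) by lia.
have W1 := w0 k.
have hX : Dl.+1 <= (tau * d * tau).+1 * w k.
  rewrite /Dl mulSn; have -> : tau * d * (w k * tau) = tau * d * tau * w k by lia.
  by rewrite -addn1 addnC leq_add2r.
have dtau : d <= tau by rewrite /tau leq_pmulr //; apply: leq_trans t5.
have hp : d * (tau * d * tau).+1 <= 2 ^ (4 * tau).
  apply: leq_trans (poly_exp tau); apply: leq_mul => //.
  rewrite -addn1 leq_add2r (_ : tau ^ 3 = tau * tau * tau); last by rewrite !expnS expn0 muln1 mulnA.
  by rewrite leq_mul2r leq_mul2l dtau !orbT.
have Y := tj j.+1.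
have tY : t <= tj j.+1 by apply: tjM.
have WY : w k <= tj j.+1 by apply: leq_trans wL; apply: wM; apply: ltnW.
have Y6 : 6 <= tj j.+1 by have := tow2_ge (3 * j.+1 + d + 3); rewrite -/(tj j.+1); lia.
have hT : 8 * tj j.+1 ^ 6 <= tow2 (16 * d).
  apply: leq_trans (big_bound Y6) _.
  have -> : 2 ^ (2 ^ tj j.+1) = tow2 (3 * j.+1 + d + 3).+2 by [].
  apply: tow2_mono; rewrite /J in jJ; lia.
have hX2 : 4 * Dl.+1 <= 8 * tj j.+1 ^ 6.
  apply: leq_trans (_ : 4 * ((tau * d * tau).+1 * w k) <= _); first by rewrite leq_mul2l hX orbT.
  have h5 : tau * d * tau <= tj j.+1 ^ 5.
    have htt : t * t <= tj j.+1 * tj j.+1 by apply: leq_mul.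
    have ht : tau <= tj j.+1 * tj j.+1 by apply: leq_trans htt; rewrite /tau leq_mul2r dt orbT.
    have h6 := leq_mul (leq_mul ht (leq_trans dt tY)) ht.
    apply: leq_trans h6 _; by rewrite !expnS expn0 muln1 !mulnA.
  set Z := tj j.+1 in h5 WY Y6 *; set P := tau * d * tau in h5 *.
  have h8 := leq_mul (leq_add h5 (leqnn 1)) WY.
  apply: leq_trans (leq_mul (leqnn 4) (_ : P.+1 * w k <= (Z ^ 5 + 1) * Z)) _.
    by rewrite -addn1.
  rewrite mulnDl mul1n (_ : Z ^ 6 = Z ^ 5 * Z); last by rewrite expnSr.
  have : Z <= Z ^ 5 * Z by rewrite leq_pmull // expn_gt0 (leq_trans _ Y6).
  lia.
exists S, A, tau; split.
- move=> a aA; apply: leq_trans (@card_NB0 _ _ D d t a Dd).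
  by apply: subset_leq_card; apply/subsetP => b; apply: NBsub; apply: AC1.
- move=> a b aA bA ab; rewrite -setI_eq0; apply/eqP/setP => x; rewrite inE in_set0; apply/negP => /andP [xa xb].
  have := iA a b aA bA ab; apply/negP/negPn/existsP; exists x.
  move: xa xb; rewrite !inE => /andP [xS /existsP [b1 /andP [b1N xb1]]] /andP [_ /existsP [b2 /andP [b2N xb2]]].
  rewrite xS /=; apply/andP; split; apply/bigcupP.
    by exists b1 => //; apply: NBsub => //; apply: AC1.
  by exists b2 => //; apply: NBsub => //; apply: AC1.
-
  set s := #|S|; set a := #|A|.
  have hQ : Q = 2 ^ (28 * tau) * (2 ^ (4 * tau) * 4).
    by rewrite /Q (_ : 4 = 2 ^ 2) // -!expnD; congr (2 ^ _); lia.
  have hw : w k.+1 = w k * Q by rewrite /w expnSr mulnA.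
  rewrite hw hQ in cS.
  set P28 := 2 ^ (28 * tau) in cS *; set P4 := 2 ^ (4 * tau) in hp cS *.
  set W := w k in cS hX W1 *; set X := (tau * d * tau).+1 in hX hp *.
  have e1 : s * P28 * (P4 * 4) * W <= a * (P4 * 4) * W.
    have -> : s * P28 * (P4 * 4) * W = s * (W * (P28 * (P4 * 4))) by lia.
    apply: leq_trans cS _.
    apply: leq_trans (leq_mul hO (leqnn d)) _.
    apply: leq_trans (_ : 4 * (a * (X * W)) * d <= _).
      by rewrite leq_mul2r leq_mul2l leq_mul2l hX !orbT.
    have -> : 4 * (a * (X * W)) * d = a * 4 * (d * X) * W by lia.
    have -> : a * (P4 * 4) * W = a * 4 * P4 * W by lia.
    by rewrite leq_mul2r leq_mul2l hp !orbT.
  have P40 : 0 < P4 * 4 by rewrite muln_gt0 expn_gt0.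
  rewrite leq_pmul2r // leq_pmul2r // in e1.
  by apply: leq_trans e1 _; rewrite leq_pmulr // expn_gt0.
- by apply: leq_trans hO _; rewrite mulnCA leq_mul2l (leq_trans hX2 hT) orbT.
- apply: leq_trans hT; apply: leq_trans (_ : t * t <= _).
    by rewrite /tau leq_mul2r dt orbT.
  have := leq_mul tY tY; move=> h; apply: leq_trans h _.
  have h1 : 0 < tj j.+1 by apply: leq_trans Y6.
  rewrite mulnn; apply: leq_trans (leq_pexp2l h1 (_ : 2 <= 6)) _ => //.
  by rewrite leq_pmull.
Qed.
Lemma merge_flip (I : finType) (S : {set I}) (rho : {ffun {j : I | j \in S} -> bool})
  (z : {ffun {j : I | j \notin S} -> bool}) (j : {j : I | j \notin S}) :
  Defs.merge rho (flip z j) = flip (Defs.merge rho z) (val j).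
Proof.
apply/ffunP => k; rewrite !ffunE.
case: insubP => [k1 k1S k1E|kS].
  have -> : (k == val j) = false.
    apply/negbTE; apply/eqP => E; move: (valP j); rewrite -E -k1E (valP k1) //.
  by [].
case: insubP => [k2 k2S k2E|kN].
  rewrite ffunE. have -> : (k2 == j) = (k == val j).
    by rewrite -k2E; apply/eqP/eqP => [->|/val_inj].
  by [].
by rewrite kS in kN.
Qed.

Lemma depset_restrict (I O : finType) (S : {set I}) (f : {ffun I -> bool} -> {ffun O -> bool})
  (rho : {ffun {j : I | j \in S} -> bool}) (i : O) (j : {j : I | j \notin S}) :
  j \in depset (restrict f rho) i -> val j \in depset f i.
Proof.
rewrite !inE => /existsP [z Hz]; apply/existsP; exists (Defs.merge rho z).
by move: Hz; rewrite /restrict merge_flip.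
Qed.

Lemma transfer (I O : finType) (d : nat) (f : {ffun I -> bool} -> {ffun O -> bool})
  (S : {set I}) (A : {set O}) (t : nat) (rho : {ffun {j : I | j \in S} -> bool}) :
  local d f ->
  (forall a, a \in A -> #|NBS (depset f) S a| <= t) ->
  (forall a b, a \in A -> b \in A -> a != b -> [disjoint XS (depset f) S a & XS (depset f) S b]) ->
  drt_local d #|A| t (restrict f rho).
Proof.
move=> Hl HN HX.
have Hsub : forall a b, b \in nbhd (restrict f rho) a -> b \in NBS (depset f) S a.
  move=> a b; rewrite inE -setI_eq0 => /set0Pn [x]; rewrite inE => /andP [xb xa].
  rewrite inE; apply/existsP; exists (val x).
  by rewrite (depset_restrict xa) (depset_restrict xb) (valP x).
split.
  move=> i; apply: leq_trans (Hl i).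
  rewrite -(card_imset _ val_inj); apply: subset_leq_card; apply/subsetP => y /imsetP [x xD ->].
  exact: (depset_restrict xD).
exists A; split; first by []. split.
  move=> a aA; apply: leq_trans (HN a aA); apply: subset_leq_card; apply/subsetP => b; exact: Hsub.
move=> a b aA bA ab; rewrite -setI_eq0; apply/eqP/setP => x; rewrite inE in_set0.
apply/negP => /andP [/bigcupP [b1 b1N x1] /bigcupP [b2 b2N x2]].
have := HX a b aA bA ab; rewrite -setI_eq0 => /eqP/setP/(_ (val x)); rewrite !inE (valP x) /=.
have -> : [exists b0 in NBS (depset f) S a, val x \in depset f b0].
  by apply/existsP; exists b1; rewrite Hsub // (depset_restrict x1).
have -> : [exists b0 in NBS (depset f) S b, val x \in depset f b0].
  by apply/existsP; exists b2; rewrite Hsub // (depset_restrict x2).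
by [].
Qed.

Lemma XS_empty (I O : finType) (f : {ffun I -> bool} -> {ffun O -> bool}) (S : {set I}) a :
  local 0 f -> XS (depset f) S a = set0.
Proof.
move=> Hl; apply/setP => x; rewrite !inE; apply/negP => /andP [_ /existsP [b /andP [bN _]]].
move: bN; rewrite inE => /existsP [y /andP [ya _]].
by have := Hl a; rewrite leqn0 cards_eq0 => /eqP E; rewrite E inE in ya.
Qed.

Theorem mainTheorem14 (d m n : nat)
  (f : {ffun 'I_m -> bool} -> {ffun 'I_n -> bool}) :
  local d f ->
  exists (S : {set 'I_m}) (r t : nat),
    ((#|S|%:R : rat) <= (r%:R : rat) / ((2%:R : rat) ^ (28 * (t%:Z) - 18)%R))%R /\
    ((r%:R : rat) >= (n%:R : rat) / ((tow2 (16 * d))%:R : rat))%R /\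
    t <= tow2 (16 * d) /\
    forall rho : {ffun {j : 'I_m | j \in S} -> bool},
      drt_local d r t (@restrict _ _ S f rho).
Proof.
case: d => [|d'] Hl.
  exists set0, n, 0; split; [|split; [|split]].
  - by apply: rat_cost; rewrite cards0.
  - by apply: rat_lb => //; rewrite muln1.
  - by [].
  - move=> rho; have := @transfer _ _ 0 f set0 [set: 'I_n] 0 rho Hl.
    rewrite cardsT card_ord; apply.
      move=> a _; rewrite leqn0 cards_eq0; apply/eqP/setP => b; rewrite in_set0.
      rewrite /NBS inE; apply/negbTE/existsP => -[y /andP [ya _]].
      by have := Hl a; rewrite leqn0 cards_eq0 => /eqP E; rewrite E inE in ya.
    by move=> a b _ _ _; rewrite (XS_empty _ _ Hl) disjoint_sym -setI_eq0 setI0.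
case: (@core _ _ d'.+1 (depset f) (ltn0Sn d') Hl) => S [A [t [h1 h2 h3 h4 h5]]].
exists S, #|A|, t; split; [|split; [|split]].
- exact: rat_cost.
- apply: rat_lb; first by apply: leq_trans (tow2_ge _).
  by rewrite card_ord in h4.
- exact: h5.
- by move=> rho; apply: transfer.
Qed.
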